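(* Let $t\ge2$, $n\ge1$, $\lambda$ a partition of length at most $tn+1$ with $t$-quotient $(\lambda^{(0)},\dots,\lambda^{(t-1)})$, and $0\le p,q\le t-1$ with $n_p(\lambda)+n_q(\lambda)=2n+1$. Let $\rho^*_{p,q}$ be the partition of length $2n+1$ obtained by adding $\lambda^{(p)}_1$ to each entry of $(\lambda^{(q)}_1,\dots,\lambda^{(q)}_{n_q(\lambda)},-\lambda^{(p)}_{n_p(\lambda)},\dots,-\lambda^{(p)}_1)$. Then \[s_{\rho^*_{p,q}}(X^t,\overline{X}^t,y^t)=\frac{(-1)^{\frac{n_p(\lambda)(n_p(\lambda)-1)}{2}}\,y^{t(\lambda^{(p)}_1+n_p(\lambda))}}{V(X^t,\overline{X}^t,y^t)}\det\begin{pmatrix}A^\lambda_{q,-q}&\overline{A}^\lambda_{p,t-p}\\ \overline{A}^\lambda_{q,-q}&A^\lambda_{p,t-p}\\ B^\lambda_{q,-q}&\overline{B}^\lambda_{p,t-p}\end{pmatrix},\] where $V(X^t,\overline{X}^t,y^t)=\prod_{1\le i<j\le n}(x_i^t-x_j^t)(x_i^t-\bar x_j^t)(x_j^t-\bar x_i^t)(\bar x_i^t-\bar x_j^t)\prod_{i=1}^n(x_i^t-y^t)(x_i^t-\bar x_i^t)(\bar x_i^t-y^t)$.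
   Context: $X=(x_1,\dots,x_n)$, $y$ indeterminates, $\bar x=1/x$, $\bar y=1/y$; $(X^t,\overline{X}^t,y^t)$ denotes the $2n+1$ variables $x_1^t,\dots,x_n^t,\bar x_1^t,\dots,\bar x_n^t,y^t$. $s_\mu(z_1,\dots,z_N)=\det(z_i^{\mu_j+N-j})/\det(z_i^{N-j})$. Beta-set $\beta_i(\lambda)=\lambda_i+tn+1-i$ ($1\le i\le tn+1$); $n_r(\lambda)$ is the number of entries congruent to $r$ mod $t$, and $\beta^{(r)}_1(\lambda)>\dots>\beta^{(r)}_{n_r(\lambda)}(\lambda)$ are those entries. $t$-quotient: writing $\beta^{(r)}_j(\lambda)=tb_j+r$, $\lambda^{(r)}=(b_j-n_r(\lambda)+j)_{j=1}^{n_r(\lambda)}$. For an integer $c$: $A^\lambda_{r,c}=(x_i^{\beta^{(r)}_j(\lambda)+c})$ and $\overline{A}^\lambda_{r,c}=(\bar x_i^{\beta^{(r)}_j(\lambda)+c})$ are $n\times n_r(\lambda)$ matrices ($1\le i\le n$, $1\le j\le n_r(\lambda)$); $B^\lambda_{r,c}=(y^{\beta^{(r)}_j(\lambda)+c})_j$ and $\overline{B}^\lambda_{r,c}=(\bar y^{\beta^{(r)}_j(\lambda)+c})_j$ are $1\times n_r(\lambda)$ row vectors. The displayed matrix is $(2n+1)\times(2n+1)$ in block form. *)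

(* Defs.v *)
From mathcomp Require Import all_boot all_order all_algebra.
Set Implicit Arguments. Unset Strict Implicit. Unset Printing Implicit Defensive.
Import Order.TTheory GRing.Theory Num.Theory.
Local Open Scope ring_scope.

Definition beta_set (lam : seq nat) (N : nat) : seq nat :=
  [seq (nth 0 lam k + (N - 1 - k))%N | k <- iota 0 N].

Definition beta_r (lam : seq nat) (N t r : nat) : seq nat :=
  [seq b <- beta_set lam N | b %% t == r]%N.

Definition n_r (lam : seq nat) (N t r : nat) : nat := size (beta_r lam N t r).

(* r-th component of the t-quotient: writing beta^(r)_j = t b_j + r,
   lambda^(r)_j = b_j - n_r + j (1-indexed j); here 0-indexed. *)
Definition tquot (lam : seq nat) (N t r : nat) : seq nat :=
  let br := beta_r lam N t r in
  mkseq (fun j => (nth 0 br j %/ t + j.+1 - size br)%N) (size br).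

Definition rho_star (lam : seq nat) (N t p q : nat) : seq nat :=
  let L := nth 0 (tquot lam N t p) 0 in
  [seq (a + L)%N | a <- tquot lam N t q] ++
  [seq (L - a)%N | a <- rev (tquot lam N t p)].

Definition schur (F : fieldType) (M : nat) (mu : seq nat) (z : 'I_M -> F) : F :=
  \det (\matrix_(i < M, j < M) z i ^+ (nth 0 mu j + (M - 1 - j))%N) /
  \det (\matrix_(i < M, j < M) z i ^+ (M - 1 - j)%N).

Definition zvars (F : fieldType) (n t : nat) (x : nat -> F) (y : F)
  : 'I_(2 * n + 1) -> F :=
  fun k => if (k < n)%N then x k ^+ t
           else if (k < 2 * n)%N then (x (k - n)%N)^-1 ^+ t
           else y ^+ t.

Definition rowvar (F : fieldType) (n : nat) (x : nat -> F) (y : F) (i : nat) : F :=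
  if (i < n)%N then x i else if (i < 2 * n)%N then (x (i - n)%N)^-1 else y.

(* The (2n+1)x(2n+1) block matrix
   ( A_{q,-q}     Abar_{p,t-p} )
   ( Abar_{q,-q}  A_{p,t-p}    )
   ( B_{q,-q}     Bbar_{p,t-p} ) *)
Definition Mblock (F : fieldType) (n t : nat) (lam : seq nat) (p q : nat)
  (x : nat -> F) (y : F) : 'M[F]_(2 * n + 1) :=
  let N := (t * n + 1)%N in
  let bq := beta_r lam N t q in
  let bp := beta_r lam N t p in
  let nq := size bq in
  \matrix_(i < 2 * n + 1, j < 2 * n + 1)
    if (j < nq)%N then rowvar n x y i ^+ (nth 0 bq j - q)%N
    else (rowvar n x y i)^-1 ^+ (nth 0 bp (j - nq) + t - p)%N.

Definition Vprod (F : fieldType) (n t : nat) (x : nat -> F) (y : F) : F :=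
  let X i := x i ^+ t in
  let Xb i := (x i)^-1 ^+ t in
  let Y := y ^+ t in
  (\prod_(i < n) \prod_(j < n | (i < j)%N)
     ((X i - X j) * (X i - Xb j) * (X j - Xb i) * (Xb i - Xb j))) *
  \prod_(i < n) ((X i - Y) * (X i - Xb i) * (Xb i - Y)).

Arguments schur {F M} mu z.
Arguments zvars {F} n t x y.
Arguments rowvar {F} n x y i.
Arguments Mblock {F} n t lam p q x y.
Arguments Vprod {F} n t x y.

(* Main.v *)
Require Import Defs.
From mathcomp Require Import all_boot all_order all_algebra.
Import GRing.Theory.
Local Open Scope ring_scope.
From mathcomp Require Import zify ring perm fingroup.

Definition rvn (a k j : nat) : nat :=
  if (a <= j < a + k)%N then (a + k - 1 - (j - a))%N else j.

Definition rv (m a k : nat) (j : 'I_m) : 'I_m := insubd j (rvn a k j).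
Arguments rv {m} a k j.

Lemma rvE m a k (j : 'I_m) : (a + k <= m)%N -> val (rv a k j) = rvn a k j.
Proof.
move=> H; rewrite /rv val_insubd; case: ifP => // /negP; rewrite /rvn.
have := ltn_ord j; case: ifP => //; lia.
Qed.

Lemma det_xcol' (R : comPzRingType) m (u v : 'I_m) (B : 'M[R]_m) :
  u != v -> \det (xcol u v B) = - \det B.
Proof.
move=> uv; rewrite xcolE det_mulmx det_perm odd_tperm uv expr1 mulrN1.
by [].
Qed.

Lemma det_rv (R : comPzRingType) m (A : 'M[R]_m) k : forall a, (a + k <= m)%N ->
  \det (\matrix_(i, j) A i (rv a k j)) = (-1) ^+ ((k * k.-1) %/ 2) * \det A.
Proof.
elim/ltn_ind: k => k IH a Hak.
case: k IH Hak => [|[|k]] IH Hak.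
- rewrite expr0 mul1r; congr (\det _); apply/matrixP => i j; rewrite mxE.
  congr (A i _); apply: val_inj; rewrite rvE // /rvn; case: ifP => // /andP[]; lia.
- rewrite expr0 mul1r; congr (\det _); apply/matrixP => i j; rewrite mxE.
  congr (A i _); apply: val_inj; rewrite rvE // /rvn; case: ifP => // /andP[] h1 h2 /=. lia.
have ha : (a < m)%N by lia.
have hb : (a + k.+1 < m)%N by lia.
pose u : 'I_m := Ordinal ha; pose v : 'I_m := Ordinal hb.
have uv : u != v by rewrite -val_eqE /=; lia.
have -> : \matrix_(i, j) A i (rv a k.+2 j) =
    xcol u v (\matrix_(i, j) A i (rv a.+1 k j)).
  apply/matrixP => i j; rewrite !mxE; congr (A i _); apply: val_inj.
  rewrite !rvE; try lia.
  case: tpermP => [->|->|ju jv]; rewrite /rvn /=.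
  + by case: ifP => [/andP[]|/negbT]; case: ifP => [/andP[]|/negbT] //; lia.
  + by case: ifP => [/andP[]|/negbT]; case: ifP => [/andP[]|/negbT] //; lia.
  have ju' : (nat_of_ord j != a) by apply/eqP => h; apply: ju; apply: val_inj.
  have jv' : (nat_of_ord j != a + k.+1)%N by apply/eqP => h; apply: jv; apply: val_inj.
  case: ifP => [/andP[]|/negbT]; case: ifP => [/andP[]|/negbT] //; lia.
rewrite (@det_xcol' R m u v _ uv) IH //; last lia.
rewrite -mulNr -mulN1r -exprS; congr (_ * _).
rewrite -signr_odd; symmetry; rewrite -signr_odd; congr (_ ^+ _).
have -> : (k.+2 * k.+2.-1 = k * k.-1 + 2 * (2 * k + 1))%N by case: k {IH Hak ha hb u v uv} => //= k'; lia.
rewrite divnDr ?dvdn_mulr // mulKn //; rewrite oddD /=.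
by rewrite addnC oddD oddM /= addbT.
Qed.

Lemma rv0E M (j : 'I_M) : nat_of_ord (rv 0 M j) = (M - 1 - j)%N.
Proof. rewrite rvE // /rvn; case: ifP => [/andP[]|/negbT]; have := ltn_ord j; lia. Qed.

Lemma rv0K M (j : 'I_M) : rv 0 M (rv 0 M j) = j.
Proof. apply: val_inj => /=; rewrite !rv0E; have := ltn_ord j; lia. Qed.

Lemma vand_rev (R : comPzRingType) M (z : 'I_M -> R) :
  \det (\matrix_(i < M, j < M) z i ^+ (M - 1 - j)%N) =
  \prod_(i < M) \prod_(j < M | (i < j)%N) (z i - z j).
Proof.
set B := \matrix_(i < M, j < M) z i ^+ j.
have -> : \matrix_(i < M, j < M) z i ^+ (M - 1 - j)%N = \matrix_(i, j) B i (rv 0 M j).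
  by apply/matrixP => i j; rewrite !mxE rv0E.
rewrite det_rv // -det_tr.
set W := Vandermonde M (\row_j z (rv 0 M j)).
have -> : B^T = \matrix_(i, j) W i (rv 0 M j).
  by apply/matrixP => i j; rewrite !mxE rv0K.
rewrite det_rv // mulrA -expr2 sqrr_sign mul1r.
rewrite det_Vandermonde.
rewrite (eq_bigr (fun i : 'I_M => \prod_(j < M | (i < j)%N) (z (rv 0 M j) - z (rv 0 M i)))); last first.
  by move=> i _; apply: eq_bigr => j _; rewrite !mxE.
rewrite !pair_big_dep /=.
rewrite [RHS](reindex_inj (h := fun p : 'I_M * 'I_M => (rv 0 M p.2, rv 0 M p.1))) /=; last first.
  by move=> [a b] [c d] /= [/(congr1 (rv 0 M)) + /(congr1 (rv 0 M))]; rewrite !rv0K => -> ->.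
apply: eq_bigl => -[a b] /=; rewrite !rv0E; have := ltn_ord a; have := ltn_ord b; lia.
Qed.

Definition Qd (R : comPzRingType) (m : nat) (f : nat -> nat -> R) : R :=
  \prod_(i < m) \prod_(j < m | (i < j)%N) f i j.
Arguments Qd {R} m f.

Lemma Q_add (R : comPzRingType) (f : nat -> nat -> R) a b :
  Qd (a + b)%N f = Qd a f * Qd b (fun i j => f (a + i)%N (a + j)%N) *
    \prod_(i < a) \prod_(j < b) f i (a + j)%N.
Proof.
rewrite /Qd big_split_ord /=.
rewrite (eq_bigr (fun i : 'I_a => (\prod_(j < a | (i < j)%N) f i j) * \prod_(j < b) f i (a + j)%N)); last first.
  move=> i _; rewrite big_split_ord /=; congr (_ * _); apply: eq_bigl => j /=.
  by have := ltn_ord i; rewrite ltn_addr.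
rewrite (eq_bigr (fun i : 'I_b => \prod_(j < b | (i < j)%N) f (a + i)%N (a + j)%N)); last first.
  move=> i _; rewrite big_split_ord /= big_pred0 ?mul1r.
    by apply: eq_bigl => j; rewrite ltn_add2l.
  move=> j /=; apply/negbTE; rewrite -leqNgt; have := ltn_ord j; lia.
by rewrite big_split /= mulrAC.
Qed.

Lemma cross (R : comPzRingType) n (h : 'I_n -> 'I_n -> R) :
  \prod_(i < n) \prod_(j < n) h i j =
  \prod_(i < n) h i i * \prod_(i < n) \prod_(j < n | (i < j)%N) (h i j * h j i).
Proof.
rewrite (eq_bigr (fun i : 'I_n => h i i * ((\prod_(j < n | (i < j)%N) h i j) * \prod_(j < n | (j < i)%N) h i j))).
  rewrite big_split /=; congr (_ * _).
  rewrite big_split /=.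
  under [RHS]eq_bigr do rewrite big_split /=.
  rewrite big_split /=; congr (_ * _).
  rewrite (exchange_big_dep xpredT) //=.
move=> i _; rewrite (bigD1 i) //= (bigID (fun j : 'I_n => (i < j)%N)) /=; congr (_ * (_ * _)).
  apply: eq_bigl => j; rewrite -val_eqE /=; case: (ltngtP i j) => //.
apply: eq_bigl => j; rewrite -val_eqE /=; case: (ltngtP i j) => //.
Qed.

Definition Zn (F : fieldType) (n t : nat) (x : nat -> F) (y : F) (k : nat) : F :=
  if (k < n)%N then x k ^+ t
  else if (k < 2 * n)%N then (x (k - n)%N)^-1 ^+ t
  else y ^+ t.
Arguments Zn {F} n t x y k.

Lemma V_eq (F : fieldType) (n t : nat) (x : nat -> F) (y : F) :
  \prod_(i < 2 * n + 1) \prod_(j < 2 * n + 1 | (i < j)%N)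
     (zvars n t x y i - zvars n t x y j) = Vprod n t x y.
Proof.
set X := fun i => x i ^+ t. set Xb := fun i => (x i)^-1 ^+ t. set Y := y ^+ t.
have -> : \prod_(i < 2 * n + 1) \prod_(j < 2 * n + 1 | (i < j)%N)
     (zvars n t x y i - zvars n t x y j) = Qd (n + n + 1)%N (fun i j => Zn n t x y i - Zn n t x y j).
  by rewrite /Qd addnn -mul2n.
rewrite !Q_add.
have Q1 : forall f : nat -> nat -> F, Qd 1 f = 1.
  by move=> f; rewrite /Qd big_ord1 big_pred0 // => j; rewrite (ord1 j).
rewrite Q1 mulr1.
have E1 : forall i, (i < n)%N -> Zn n t x y i = X i.
  by move=> i hi; rewrite /Zn hi.
have E2 : forall i, (i < n)%N -> Zn n t x y (n + i) = Xb i.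
  move=> i hi; rewrite /Zn ifF; last lia.
  by rewrite ifT ?addKn //; lia.
have E3 : Zn n t x y (n + n + 0) = Y.
  by rewrite /Zn !ifF //; lia.
rewrite /Qd.
have H1 : \prod_(i < n) \prod_(j < n | (i < j)%N) (Zn n t x y i - Zn n t x y j)
   = \prod_(i < n) \prod_(j < n | (i < j)%N) (X i - X j).
  by apply: eq_bigr => i _; apply: eq_bigr => j _; rewrite !E1.
have H2 : \prod_(i < n) \prod_(j < n | (i < j)%N) (Zn n t x y (n + i) - Zn n t x y (n + j))
   = \prod_(i < n) \prod_(j < n | (i < j)%N) (Xb i - Xb j).
  by apply: eq_bigr => i _; apply: eq_bigr => j _; rewrite !E2.
have H3 : \prod_(i < n) \prod_(j < n) (Zn n t x y i - Zn n t x y (n + j))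
   = \prod_(i < n) \prod_(j < n) (X i - Xb j).
  by apply: eq_bigr => i _; apply: eq_bigr => j _; rewrite E1 ?E2.
have H4 : \prod_(i < n + n) \prod_(j < 1) (Zn n t x y i - Zn n t x y (n + n + j))
   = \prod_(i < n) (X i - Y) * \prod_(i < n) (Xb i - Y).
  rewrite big_split_ord /=; congr (_ * _); apply: eq_bigr => i _; rewrite big_ord1 E3.
    by rewrite E1.
  by rewrite E2.
transitivity ((\prod_(i < n) \prod_(j < n | (i < j)%N) (X i - X j)) *
   (\prod_(i < n) \prod_(j < n | (i < j)%N) (Xb i - Xb j)) *
   (\prod_(i < n) \prod_(j < n) (X i - Xb j)) *
   (\prod_(i < n) (X i - Y) * \prod_(i < n) (Xb i - Y))).
  by congr (_ * _ * _ * _); [exact: H1 | exact: H2 | exact: H3 | exact: H4].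
rewrite cross /Vprod /X /Xb /Y /=.
under [in RHS]eq_bigr => i _ do rewrite big_split big_split big_split /=.
rewrite big_split big_split big_split /=.
rewrite big_split big_split /=.
under [X in _ * _ * (_ * X) * _ = _]eq_bigr => i _ do rewrite big_split /=.
rewrite [X in _ * _ * (_ * X) * _ = _]big_split /=.
ring.
Qed.

Lemma zvars_rowvar (F : fieldType) n t x (y : F) (i : 'I_(2 * n + 1)) :
  zvars n t x y i = rowvar n x y i ^+ t.
Proof. by rewrite /zvars /rowvar; case: ifP => //; case: ifP. Qed.

Lemma rowvar_neq0 (F : fieldType) n x (y : F) i :
  (forall i, (i < n)%N -> x i != 0) -> y != 0 -> rowvar n x y i != 0.
Proof.
move=> hx hy; rewrite /rowvar; case: ifP => h1; first exact: hx.
case: ifP => h2 //; rewrite invr_eq0; apply: hx; lia.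
Qed.

Lemma prod_rowvar (F : fieldType) n x (y : F) :
  (forall i, (i < n)%N -> x i != 0) ->
  \prod_(i < 2 * n + 1) rowvar n x y i = y.
Proof.
move=> hx.
rewrite (_ : (2 * n + 1 = n + n + 1)%N); last lia.
rewrite big_split_ord big_ord1 big_split_ord /=.
rewrite {3}/rowvar !ifF; try lia.
rewrite -big_split /= big1 ?mul1r // => i _.
have hi := ltn_ord i; rewrite /rowvar ifT // ifF; last lia.
rewrite ifT; last by have := ltn_ord i; lia.
by rewrite addKn mulfV // hx.
Qed.

Set Implicit Arguments. Unset Strict Implicit.
Local Close Scope ring_scope.

Lemma beta_sorted lam N : sorted geq lam -> sorted gtn (beta_set lam N).
Proof.
move=> hs; apply/(sortedP 0) => i; rewrite size_map size_iota => hi.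
rewrite !(nth_map 0) ?size_iota; try lia.
rewrite !nth_iota; try lia.
rewrite !add0n /=.
have : (nth 0 lam i.+1 <= nth 0 lam i)%N.
  case: (ltnP i.+1 (size lam)) => h.
    by move/(sortedP 0): hs => /(_ i h).
  by rewrite (nth_default 0 h).
lia.
Qed.

Lemma beta_r_mod lam N t r k : (k < size (beta_r lam N t r))%N ->
  (nth 0 (beta_r lam N t r) k %% t = r)%N.
Proof.
move=> hk; have := mem_nth 0 hk; rewrite mem_filter => /andP[/eqP -> _] //.
Qed.

Lemma beta_r_dec lam N t r j k : (0 < t)%N -> sorted geq lam -> (j <= k)%N ->
  (k < size (beta_r lam N t r))%N ->
  (nth 0 (beta_r lam N t r) k %/ t + (k - j) <= nth 0 (beta_r lam N t r) j %/ t)%N.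
Proof.
move=> ht hs hjk hk.
set s := beta_r lam N t r.
have ss : sorted gtn s.
  apply: sorted_filter; last exact: beta_sorted.
  by move=> a b c h1 h2; exact: ltn_trans h2 h1.
have step : forall i, (i.+1 < size s)%N -> (nth 0 s i.+1 %/ t < nth 0 s i %/ t)%N.
  move=> i hi.
  have h1 : (nth 0 s i.+1 < nth 0 s i)%N by move/(sortedP 0): ss => /(_ i hi).
  have m1 := beta_r_mod hi; have m2 := beta_r_mod (ltnW hi).
  rewrite -/s in m1 m2.
  move: h1; rewrite {1}(divn_eq (nth 0 s i.+1) t) {1}(divn_eq (nth 0 s i) t) m1 m2.
  rewrite ltn_add2r ltn_pmul2r //.
have {hjk} [d hd] : exists d, k = (j + d)%N by exists (k - j)%N; lia.
subst k.
rewrite addKn.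
elim: d hk => [|d IH] hk; first by rewrite !addn0.
have hk' : (j + d < size s)%N by move: hk; rewrite -/s; lia.
have := IH hk'.
have hst := step (j + d)%N; rewrite -addnS in hst; have := hst hk.
rewrite addnS; lia.
Qed.

Lemma beta_r_low lam N t r k : (0 < t)%N -> sorted geq lam ->
  (k < size (beta_r lam N t r))%N ->
  (size (beta_r lam N t r) <= nth 0 (beta_r lam N t r) k %/ t + k + 1)%N.
Proof.
move=> ht hs hk.
have h1 : (k <= (size (beta_r lam N t r)).-1)%N by lia.
have h2 : ((size (beta_r lam N t r)).-1 < size (beta_r lam N t r))%N by lia.
have := @beta_r_dec lam N t r k (size (beta_r lam N t r)).-1 ht hs h1 h2.
set u := (nth _ _ _ %/ t)%N. set v := (nth _ _ _ %/ t)%N. lia.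
Qed.

Unset Implicit Arguments.
Local Open Scope ring_scope.

Lemma size_tquot lam N t r : size (tquot lam N t r) = size (beta_r lam N t r).
Proof. by rewrite /tquot size_mkseq. Qed.

Lemma nth_tquot lam N t r j : (j < size (beta_r lam N t r))%N ->
  nth 0%N (tquot lam N t r) j =
  (nth 0%N (beta_r lam N t r) j %/ t + j.+1 - size (beta_r lam N t r))%N.
Proof. by move=> hj; rewrite /tquot nth_mkseq. Qed.

Theorem lemma3p11 (F : fieldType) (t n : nat) (lam : seq nat) (p q : nat)
  (x : nat -> F) (y : F) :
  (2 <= t)%N -> (1 <= n)%N ->
  sorted geq lam -> (size lam <= t * n + 1)%N ->
  (p < t)%N -> (q < t)%N ->
  (n_r lam (t * n + 1) t p + n_r lam (t * n + 1) t q = 2 * n + 1)%N ->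
  (forall i, (i < n)%N -> x i != 0) -> y != 0 ->
  Vprod n t x y != 0 ->
  schur (rho_star lam (t * n + 1) t p q) (zvars n t x y) =
    (-1) ^+ ((n_r lam (t * n + 1) t p * (n_r lam (t * n + 1) t p).-1) %/ 2)
    * y ^+ (t * (nth 0 (tquot lam (t * n + 1) t p) 0 + n_r lam (t * n + 1) t p))
    / Vprod n t x y * \det (Mblock n t lam p q x y).
Proof.
move=> ht hn hs hsz hp hq hsum hx hy hV.
rewrite /n_r in hsum *.
set N := (t * n + 1)%N in hsum *.
set bp := beta_r lam N t p in hsum *. set bq := beta_r lam N t q in hsum *.
set np := size bp in hsum *. set nq := size bq in hsum *.
set L := (nth 0%N (tquot lam N t p) 0%N : nat).
have ht0 : (0 < t)%N by lia.
rewrite /schur vand_rev V_eq.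
have hM : (nq + np <= 2 * n + 1)%N by lia.
have HD : \matrix_(i < 2 * n + 1, j < 2 * n + 1)
    zvars n t x y i ^+ (nth 0 (rho_star lam N t p q) j + (2 * n + 1 - 1 - j))%N
  = diag_mx (\row_(i < 2 * n + 1) rowvar n x y i ^+ (t * (L + np))%N) *m
    \matrix_(i, j) Mblock n t lam p q x y i (rv nq np j).
  rewrite mul_diag_mx; apply/matrixP => i j; rewrite !mxE zvars_rowvar -exprM.
  rewrite -/N -/bp -/bq -/nq.
  have hj := ltn_ord j.
  have hrv := @rvE _ nq np j hM.
  rewrite /rho_star nth_cat size_map size_tquot -/N -/bq -/nq hrv /rvn.
  have hr0 := @rowvar_neq0 F n x y i hx hy.
  case: (ltnP j nq) => hjq.
    rewrite /= hjq (nth_map 0%N) ?size_tquot // nth_tquot // -/bq -/nq -/L.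
    rewrite -exprD; congr (_ ^+ _).
    have hm := beta_r_mod hjq.
    have hl := beta_r_low ht0 hs hjq.
    have hdiv := divn_eq (nth 0 bq j) t.
    rewrite -/bq -/nq in hm hl.
    set B := (nth 0 bq j %/ t)%N in hl hdiv *.
    set b := nth 0 bq j in hm hl hdiv *.
    set P := (B * t)%N in hdiv.
    have -> : (b - q = P)%N by lia.
    have -> : (B + j.+1 - nq + L + (2 * n + 1 - 1 - j) = L + np + B)%N by lia.
    by rewrite mulnDr /P (mulnC t B).
  set k := (2 * n + 1 - 1 - j)%N.
  have hk : (k < np)%N by lia.
  have hjnp : (j < nq + np)%N by lia.
  rewrite /= hjnp ifF; last lia.
  have -> : (nq + np - 1 - (j - nq) - nq = k)%N by lia.
  rewrite (nth_map 0%N); last by rewrite size_rev size_tquot -/N -/bp -/np; lia.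
  rewrite nth_rev; last by rewrite size_tquot -/N -/bp -/np; lia.
  rewrite size_tquot -/N -/bp -/np.
  have -> : (np - (j - nq).+1 = k)%N by lia.
  rewrite nth_tquot // -/N -/bp -/np -/L.
  have hnp0 : (0 < np)%N by lia.
  have hL : L = (nth 0 bp 0 %/ t + 1 - np)%N by rewrite /L nth_tquot.
  have hm := beta_r_mod hk.
  have hl := beta_r_low ht0 hs hk.
  have hl0 := beta_r_low ht0 hs hnp0.
  have hd := beta_r_dec ht0 hs (leq0n k) hk.
  rewrite -/bp -/np in hm hl hl0 hd.
  have hdiv := divn_eq (nth 0 bp k) t.
  set Bk := (nth 0 bp k %/ t)%N in hl hd hdiv *.
  set B0 := (nth 0 bp 0 %/ t)%N in hl0 hd hL.
  set b := nth 0 bp k in hm hdiv *.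
  set P := (Bk * t)%N in hdiv.
  have -> : (b + t - p = P + t)%N by lia.
  have -> : (t * (L + np) = t * ((L - (Bk + k.+1 - np)) + k) + (P + t))%N.
    have -> : (L + np = (L - (Bk + k.+1 - np)) + k + (Bk + 1))%N by lia.
    by rewrite /P mulnDr [(t * (Bk + 1))%N]mulnDr muln1 (mulnC t Bk).
  by rewrite exprD exprVn mulfK // expf_neq0.
rewrite HD det_mulmx det_diag (@det_rv _ _ _ np nq hM).
under eq_bigr => i _ do rewrite mxE.
rewrite prodrXl prod_rowvar //.
by rewrite mulrAC [_ * (_ * _)]mulrC -!mulrA [_ * (_ / _)]mulrC !mulrA.
Qed.
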